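(* Let $q=p^m$ with $p$ an odd prime, $q\equiv 1\pmod 3$, $q\geq 13$. In the graph $C_P(q)$: (a) for all nonzero $r,s\in GF(q)$, the induced subgraphs $[P_r]$ and $[P_s]$ are isomorphic; (b) for every nonzero $r$ and distinct $i,j\in GF(q)$, the edge set of $[B_i(r)\cup B_j(r)]$ is a perfect matching between $B_i(r)$ and $B_j(r)$; (c) for every nonzero $r$, $[P_r]$ is regular of degree $q-1$; (d) for every non-isolated vertex $v$ of $C_P(q)$, the subgraph induced by the set $N(v)$ of neighbors of $v$ is $2$-regular, i.e. a disjoint union of cycles.
   Context: $PGL(2,q)$ is the group of maps $x\mapsto\frac{ax+b}{cx+d}$ ($a,b,c,d\in GF(q)$, $ad\neq bc$) acting on $GF(q)\cup\{\infty\}$ with the usual conventions ($-d/c\mapsto\infty$, $\infty\mapsto a/c$ if $c\neq0$, $\infty\mapsto\infty$ if $c=0$). For $K,i\in GF(q)$ and $r\in GF(q)\setminus\{0\}$, $f_{K,r,i}$ is the element of $PGL(2,q)$ with $f_{K,r,i}(x)=K+\frac{r}{x-i}$ for $x\notin\{i,\infty\}$, $f_{K,r,i}(\infty)=K$, $f_{K,r,i}(i)=\infty$. For $r\neq0$, $P_r=\{f_{a,r,i}: a,i\in GF(q)\}$ and $B_i(r)=\{f_{a,r,i}:a\in GF(q)\}$. $hd(\pi,\sigma)$ is the number of points at which $\pi,\sigma$ differ. With distinguished element $F=\infty$, $\pi^{\triangle}$ is the permutation with $\pi^{\triangle}(\pi^{-1}(\infty))=\pi(\infty)$, $\pi^{\triangle}(\infty)=\infty$,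 $\pi^{\triangle}(x)=\pi(x)$ otherwise. The contraction graph $C_P(q)$ has vertex set $PGL(2,q)$, with distinct $\pi,\sigma$ adjacent iff $hd(\pi^{\triangle},\sigma^{\triangle})=q-4$. For a vertex set $S$, $[S]$ denotes the induced subgraph of $C_P(q)$ on $S$. *)

(* Defs.v *)
From HB Require Import structures.
From mathcomp Require Import all_boot all_order all_algebra all_fingroup all_field.
Set Implicit Arguments. Unset Strict Implicit. Unset Printing Implicit Defensive.
Import GRing.Theory.
Local Open Scope ring_scope.

(* The projective line GF(q) ∪ {∞} is modelled as [option F], with None = ∞. *)
Section PGL.
Variable F : finFieldType.

Definition mobius (a b c d : F) (x : option F) : option F :=
  if c == 0 then
    match x with Some y => Some ((a * y + b) / d) | None => None end
  else
    match x with
    | Some y => if y == - d / c then None else Some ((a * y + b) / (c * y + d))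
    | None => Some (a / c)
    end.

Definition PGL : {set {perm option F}} :=
  [set s : {perm option F} | [exists a : F, exists b : F, exists c : F, exists d : F,
     (a * d != b * c) && [forall x, s x == mobius a b c d x]]].

Definition fKri (K r i : F) (x : option F) : option F :=
  match x with
  | Some y => if y == i then None else Some (K + r / (y - i))
  | None => Some K
  end.

Definition Pr (r : F) : {set {perm option F}} :=
  [set s in PGL | [exists a : F, exists i : F, [forall x, s x == fKri a r i x]]].

Definition Bi (r i : F) : {set {perm option F}} :=
  [set s in PGL | [exists a : F, [forall x, s x == fKri a r i x]]].

Definition contr (s : {perm option F}) (x : option F) : option F :=
  if x == None then None
  else if s x == None then s None else s x.

Definition hd (f g : option F -> option F) : nat := #|[pred x | f x != g x]|.

Definition adj (s t : {perm option F}) : bool :=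
  [&& s \in PGL, t \in PGL, s != t & hd (contr s) (contr t) == (#|F| - 4)%N].

Definition nbhd (v : {perm option F}) : {set {perm option F}} :=
  [set w in PGL | adj v w].
End PGL.

(* Main.v *)
Require Import Defs.
From HB Require Import structures.
From mathcomp Require Import all_boot all_order all_algebra all_fingroup all_solvable all_field.
From mathcomp Require Import ring zify.
Set Implicit Arguments. Unset Strict Implicit. Unset Printing Implicit Defensive.
Import GRing.Theory.
Local Open Scope ring_scope.

Ltac fld := field; repeat (apply/andP; split); try assumption.

Section Aux.
Variable F : finFieldType.

Lemma omega_ex : (#|F| %% 3 = 1)%N -> exists w : F, w ^+ 2 + w + 1 = 0 /\ w != 1.
Proof.
move=> H3.
have d3 : (3 %| #|[set: {unit F}]|)%N.
  rewrite card_finField_unit.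
  have := divn_eq #|F| 3; rewrite H3 => E.
  by apply/dvdnP; exists (#|F| %/ 3)%N; rewrite {1}E addn1.
have [u _ ou] := Cauchy (isT : prime 3) d3.
exists (FinRing.uval u).
have h3 : FinRing.uval u ^+ 3 = 1.
  by rewrite -FinRing.val_unitX -ou expg_order.
have h1 : FinRing.uval u != 1.
  apply/negP => /eqP h; suff : (#[u]%g == 1)%N by rewrite ou.
  by rewrite order_eq1; apply/eqP; apply: val_inj; exact: h.
have : (FinRing.uval u - 1) * (FinRing.uval u ^+ 2 + FinRing.uval u + 1) = 0.
  set x := FinRing.uval u.
  have -> : (x - 1) * (x ^+ 2 + x + 1) = x ^+ 3 - 1 by ring.
  by rewrite h3 subrr.
move=> E; split=> //.
by move/eqP: E; rewrite mulf_eq0 subr_eq0 (negbTE h1) /= => /eqP.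
Qed.

Definition qset (c2 c1 c0 : F) := [set x : F | c2 * x ^+ 2 + c1 * x + c0 == 0].

Lemma quad_card (c2 c1 c0 : F) : ~~ [&& c2 == 0, c1 == 0 & c0 == 0] ->
  (#|qset c2 c1 c0| <= 2)%N.
Proof.
move=> H.
pose p := \poly_(k < 3) nth (0:F) [:: c0; c1; c2] k.
have pE (x : F) : p.[x] = c2 * x ^+ 2 + c1 * x + c0.
  rewrite horner_poly !big_ord_recr big_ord0 /=. ring.
have p0 : p != 0.
  apply: contra H => /eqP P0.
  have e k : p`_k = 0 by rewrite P0 coef0.
  have := e 0%N; have := e 1%N; have := e 2%N.
  by rewrite !coef_poly /= => -> -> ->; rewrite eqxx.
have := max_poly_roots p0 (rs := enum (qset c2 c1 c0)).
rewrite enum_uniq -cardE => /(_ _ isT) h.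
have : (size p <= 3)%N by apply: size_poly.
suff: (#|qset c2 c1 c0| < size p)%N by lia.
apply: h; apply/allP => x; rewrite mem_enum inE /root pE; done.
Qed.

Lemma card_spec (S D : {set F}) (c2 c1 c0 : F) : ~~ [&& c2 == 0, c1 == 0 & c0 == 0] ->
  (forall x, x \in S -> x \notin D -> c2 * x ^+ 2 + c1 * x + c0 = 0) ->
  (#|S| <= #|S :&: D| + 2)%N.
Proof.
move=> nz H; rewrite -(cardsID D S) leq_add2l.
apply: leq_trans (quad_card nz); apply: subset_leq_card; apply/subsetP => x.
by rewrite !inE => /andP [xD xS]; apply/eqP; apply: H.
Qed.

Definition G (K r i : F) (x : F) := K + r / (x - i).
Definition aff (a b x : F) := a * x + b.
Definition agree (g h : F -> F) := [set x | g x == h x].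

Lemma agreeC (g h : F -> F) : agree g h = agree h g.
Proof. by apply/setP => x; rewrite !inE eq_sym. Qed.

Lemma L1 (a b a' b' : F) : (a != a') || (b != b') ->
  (#|agree (aff a b) (aff a' b')| <= 2)%N.
Proof.
move=> H.
have := @card_spec (agree (aff a b) (aff a' b')) set0 0 (a - a') (b - b').
rewrite setI0 cards0; apply.
  apply/negP => /and3P [_ /eqP h1 /eqP h2]; move: H.
  by rewrite (subr0_eq h1) (subr0_eq h2) !eqxx.
move=> x; rewrite inE /aff => /eqP E _.
have -> : 0 * x ^+ 2 + (a - a') * x + (b - b') = (a * x + b) - (a' * x + b') by ring.
by rewrite E subrr.
Qed.

Lemma L2 (a b L s j : F) : a != 0 ->
  (#|agree (aff a b) (G L s j)| <= 3)%N.
Proof.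
move=> H.
have := @card_spec (agree (aff a b) (G L s j)) [set j] a (b - L - a * j) (- (b - L) * j - s).
move=> h; apply: leq_trans (h _ _) _.
- by rewrite (negbTE H).
- move=> x; rewrite !inE /G /aff => /eqP E xj.
  have xj' : x - j != 0 by rewrite subr_eq0.
  have -> : a * x ^+ 2 + (b - L - a * j) * x + (- (b - L) * j - s) = (x - j) * ((a * x + b) - (L + s / (x - j))) by fld.
  by rewrite E subrr mulr0.
- have : (#|agree (aff a b) (G L s j) :&: [set j]| <= 1)%N.
    by rewrite -(cards1 j); apply: subset_leq_card; apply: subsetIr.
  lia.
Qed.

Lemma L3 (K r L s i : F) : (K != L) || (r != s) ->
  (#|agree (G K r i) (G L s i)| <= 3)%N.
Proof.
move=> H.
have := @card_spec (agree (G K r i) (G L s i)) [set i] 0 (K - L) (r - s - (K - L) * i).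
move=> h; apply: leq_trans (h _ _) _.
- apply/negP => /and3P [_ /eqP h1 /eqP h2]; move: H h2.
  rewrite (subr0_eq h1) subrr mul0r subr0 => H h2.
  by move: H; rewrite (subr0_eq h2) !eqxx.
- move=> x; rewrite !inE /G => /eqP E xj.
  have xj' : x - i != 0 by rewrite subr_eq0.
  have -> : 0 * x ^+ 2 + (K - L) * x + (r - s - (K - L) * i) = (x - i) * ((K + r / (x - i)) - (L + s / (x - i))) by fld.
  by rewrite E subrr mulr0.
- have : (#|agree (G K r i) (G L s i) :&: [set i]| <= 1)%N.
    by rewrite -(cards1 i); apply: subset_leq_card; apply: subsetIr.
  lia.
Qed.

Lemma L4gen (K r L s i j : F) : i != j -> r != 0 ->
  (#|agree (G K r i) (G L s j)| <= #|agree (G K r i) (G L s j) :&: [set i; j]| + 2)%N.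
Proof.
move=> ij r0.
apply: (@card_spec _ _ (K - L) (- (K - L) * (i + j) + r - s) ((K - L) * i * j - r * j + s * i)).
- apply/negP => /and3P [/eqP h1 /eqP h2 /eqP h3]; move: h2 h3.
  rewrite (subr0_eq h1) => h2 h3.
  have rs : r = s by apply: subr0_eq; rewrite -h2; ring.
  have : r * (i - j) = 0 by rewrite -h3 rs; ring.
  move/eqP; rewrite mulf_eq0 subr_eq0 (negbTE r0) (negbTE ij) //.
- move=> x; rewrite !inE /G negb_or => /eqP E /andP [xi xj].
  have xi' : x - i != 0 by rewrite subr_eq0.
  have xj' : x - j != 0 by rewrite subr_eq0.
  have -> : (K - L) * x ^+ 2 + (- (K - L) * (i + j) + r - s) * x + ((K - L) * i * j - r * j + s * i) = (x - i) * (x - j) * ((K + r / (x - i)) - (L + s / (x - j))) by fld.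
  by rewrite E subrr mulr0.
Qed.

Lemma L4a (K r L s i j : F) : i != j -> r != 0 ->
  (#|agree (G K r i) (G L s j)| <= 4)%N.
Proof.
move=> ij r0; apply: leq_trans (L4gen K L s ij r0) _.
have : (#|agree (G K r i) (G L s j) :&: [set i; j]| <= 2)%N.
  apply: leq_trans (subset_leq_card (subsetIr _ _)) _.
  by rewrite cards2; case: (i != j).
lia.
Qed.

Lemma L4b (K r L s i j : F) : i != j -> r != 0 ->
  (4 <= #|agree (G K r i) (G L s j)|)%N -> s = r /\ L = K + r / (j - i).
Proof.
move=> ij r0 h4.
have hi : i \in agree (G K r i) (G L s j).
  apply/negPn/negP => ni.
  have := L4gen K L s ij r0.
  have : (#|agree (G K r i) (G L s j) :&: [set i; j]| <= 1)%N.
    rewrite -(cards1 j); apply: subset_leq_card; apply/subsetP => x.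
    rewrite in_setI => /andP [xS]; rewrite !inE => /orP [/eqP xi|->//].
    by rewrite xi in xS; rewrite xS in ni.
  lia.
have hj : j \in agree (G K r i) (G L s j).
  apply/negPn/negP => ni.
  have := L4gen K L s ij r0.
  have : (#|agree (G K r i) (G L s j) :&: [set i; j]| <= 1)%N.
    rewrite -(cards1 i); apply: subset_leq_card; apply/subsetP => x.
    rewrite in_setI => /andP [xS]; rewrite !inE => /orP [->//|/eqP xi].
    by rewrite xi in xS; rewrite xS in ni.
  lia.
move: hi hj; rewrite !inE /G !subrr invr0 !mulr0 !addr0 => /eqP hi /eqP hj.
split => //.
have ji : j - i != 0 by rewrite subr_eq0 eq_sym.
have ij' : i - j != 0 by rewrite subr_eq0.
have : (r - s) / (j - i) = 0.
  have -> : (r - s) / (j - i) = (K + r / (j - i)) - (K - s / (i - j)) by fld.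
  by rewrite hj hi addrK subrr.
move/eqP; rewrite mulf_eq0 invr_eq0 (negbTE ji) orbF subr_eq0 => /eqP.
by move=> ->.
Qed.

Lemma tri (t x r : F) : x != 0 -> t ^+ 2 - t + 1 = 0 ->
  r / (t * x) = r / x + r / ((t - 1) * x).
Proof.
move=> x0 ht.
have t0 : t != 0 by apply/eqP => e; move: ht; rewrite e expr0n /= subr0 add0r; apply/eqP; exact: oner_neq0.
have t1 : t - 1 != 0.
  by rewrite subr_eq0; apply/eqP => e; move: ht; rewrite e expr1n subrr add0r; apply/eqP; exact: oner_neq0.
have E : r / (t * x) - (r / x + r / ((t - 1) * x)) = - r * (t ^+ 2 - t + 1) / (t * (t - 1) * x) by fld.
by apply/eqP; rewrite -subr_eq0 E ht mulr0 mul0r.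
Qed.

Lemma L5 (w K r i j : F) : w ^+ 2 + w + 1 = 0 -> w != 1 -> i != j -> r != 0 ->
  (4 <= #|agree (G K r i) (G (K + r / (j - i))%R r j)|)%N.
Proof.
move=> hw w1 ij r0.
have ji : j - i != 0 by rewrite subr_eq0 eq_sym.
have ij' : i - j != 0 by rewrite subr_eq0.
have w0 : w != 0 by apply/eqP => e; move: hw; rewrite e expr0n /= !add0r; apply/eqP; exact: oner_neq0.
have w3 : w ^+ 3 = 1.
  have -> : w ^+ 3 = (w - 1) * (w ^+ 2 + w + 1) + 1 by ring.
  by rewrite hw mulr0 add0r.
pose t1 := - w; pose t2 := - w ^+ 2.
have ht1 : t1 ^+ 2 - t1 + 1 = 0 by rewrite /t1 -hw; ring.
have ht2 : t2 ^+ 2 - t2 + 1 = 0.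
  rewrite /t2 -hw; have -> : (- w ^+ 2) ^+ 2 = w ^+ 3 * w by ring.
  by rewrite w3 mul1r; ring.
have tn0 (t : F) : t ^+ 2 - t + 1 = 0 -> t != 0.
  by move=> ht; apply/eqP => e; move: ht; rewrite e expr0n /= subr0 add0r; apply/eqP; exact: oner_neq0.
have tn1 (t : F) : t ^+ 2 - t + 1 = 0 -> t - 1 != 0.
  by move=> ht; rewrite subr_eq0; apply/eqP => e; move: ht; rewrite e expr1n subrr add0r; apply/eqP; exact: oner_neq0.
pose xt (t : F) := i + t * (j - i).
have mem (t : F) : t ^+ 2 - t + 1 = 0 -> xt t \in agree (G K r i) (G (K + r / (j - i)) r j).
  move=> ht; rewrite inE /G /xt.
  have -> : i + t * (j - i) - i = t * (j - i) by ring.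
  have -> : i + t * (j - i) - j = (t - 1) * (j - i) by ring.
  by rewrite (tri r ji ht) addrA.
have xti (t : F) : t ^+ 2 - t + 1 = 0 -> xt t != i.
  move=> ht; rewrite /xt -subr_eq0 (_ : i + t * (j - i) - i = t * (j - i)); last by ring.
  by rewrite mulf_neq0 // tn0.
have xtj (t : F) : t ^+ 2 - t + 1 = 0 -> xt t != j.
  move=> ht; rewrite /xt -subr_eq0 (_ : i + t * (j - i) - j = (t - 1) * (j - i)); last by ring.
  by rewrite mulf_neq0 // tn1.
have x12 : xt t1 != xt t2.
  rewrite /xt -subr_eq0 (_ : i + t1 * (j - i) - (i + t2 * (j - i)) = w * (w - 1) * (j - i)); last by rewrite /t1 /t2; ring.
  by rewrite !mulf_neq0 // subr_eq0.
have U : uniq [:: i; j; xt t1; xt t2].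
  rewrite /= !inE !negb_or ij /= !(eq_sym i) !(eq_sym j) (xti _ ht1) (xti _ ht2) (xtj _ ht1) (xtj _ ht2) x12.
  done.
rewrite -[4%N]/(size [:: i; j; xt t1; xt t2]) -(card_uniqP U).
apply: subset_leq_card; apply/subsetP => x.
rewrite !inE => /orP [/eqP->|/orP [/eqP->|/orP [/eqP->|/eqP->]]].
- rewrite /G !subrr invr0 mulr0 addr0.
  apply/eqP; fld.
- by rewrite /G !subrr invr0 mulr0 addr0.
- by have := mem _ ht1; rewrite inE.
- by have := mem _ ht2; rewrite inE.
Qed.

Lemma root_facts (w : F) : w ^+ 2 + w + 1 = 0 -> w != 1 ->
  [/\ (-w) ^+ 2 - (-w) + 1 = 0, (- w ^+ 2) ^+ 2 - (- w ^+ 2) + 1 = 0 & -w != - w ^+ 2].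
Proof.
move=> hw w1.
have w0 : w != 0 by apply/eqP => e; move: hw; rewrite e expr0n /= !add0r; apply/eqP; exact: oner_neq0.
have w3 : w ^+ 3 = 1.
  have -> : w ^+ 3 = (w - 1) * (w ^+ 2 + w + 1) + 1 by ring.
  by rewrite hw mulr0 add0r.
split.
- by rewrite -hw; ring.
- rewrite -hw; have -> : (- w ^+ 2) ^+ 2 = w ^+ 3 * w by ring.
  by rewrite w3 mul1r; ring.
- rewrite -subr_eq0 (_ : - w - - w ^+ 2 = w * (w - 1)); last by ring.
  by rewrite mulf_neq0 // subr_eq0.
Qed.

Lemma xt_facts (t r i j : F) : i != j -> t ^+ 2 - t + 1 = 0 ->
  [/\ i + t * (j - i) != i, i + t * (j - i) != j &
     r / (i + t * (j - i) - i) = r / (j - i) + r / (i + t * (j - i) - j)].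
Proof.
move=> ij ht.
have ji : j - i != 0 by rewrite subr_eq0 eq_sym.
have tn0 : t != 0.
  by apply/eqP => e; move: ht; rewrite e expr0n /= subr0 add0r; apply/eqP; exact: oner_neq0.
have tn1 : t - 1 != 0.
  by rewrite subr_eq0; apply/eqP => e; move: ht; rewrite e expr1n subrr add0r; apply/eqP; exact: oner_neq0.
have e1 : i + t * (j - i) - i = t * (j - i) by ring.
have e2 : i + t * (j - i) - j = (t - 1) * (j - i) by ring.
split.
- by rewrite -subr_eq0 e1 mulf_neq0.
- by rewrite -subr_eq0 e2 mulf_neq0.
- by rewrite e1 e2 (tri r ji ht).
Qed.

Lemma tri_inv (w r i j k : F) : w ^+ 2 + w + 1 = 0 -> i != j -> r != 0 ->
  k != i -> k != j -> r / (k - i) = r / (j - i) + r / (k - j) ->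
  (k == i + (- w) * (j - i)) || (k == i + (- w ^+ 2) * (j - i)).
Proof.
move=> hw ij r0 ki kj E.
have ji : j - i != 0 by rewrite subr_eq0 eq_sym.
have ki' : k - i != 0 by rewrite subr_eq0.
have kj' : k - j != 0 by rewrite subr_eq0.
pose t := (k - i) / (j - i).
have ht : t ^+ 2 - t + 1 = 0.
  have -> : t ^+ 2 - t + 1 = - ((k - i) * (k - j)) / (r * (j - i)) * (r / (k - i) - (r / (j - i) + r / (k - j))).
    by rewrite /t; fld.
  by rewrite E subrr mulr0.
have : (t + w) * (t + w ^+ 2) = 0.
  have -> : (t + w) * (t + w ^+ 2) = t ^+ 2 - t + 1 + (w ^+ 2 + w + 1) * (t + w - 1) by ring.
  by rewrite ht hw mul0r addr0.
have kE : k = i + t * (j - i) by rewrite /t; fld.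
move/eqP; rewrite mulf_eq0 => /orP [] /eqP h.
- by rewrite kE (_ : t = - w) ?eqxx //; apply/eqP; rewrite -addr_eq0 h.
- by rewrite kE (_ : t = - w ^+ 2) ?eqxx ?orbT //; apply/eqP; rewrite -addr_eq0 h.
Qed.

Definition nz (r : F) := if r == 0 then 1 else r.

Lemma fKri_inj (K r i : F) : r != 0 -> injective (fKri K r i).
Proof.
move=> r0 [y|] [y'|] /=.
- case: ifP => yi; case: ifP => y'i // .
  + by move: yi y'i => /eqP -> /eqP ->.
  + move=> [] /addrI /(mulfI r0) /invr_inj /(congr1 (fun z => z + i)).
    by rewrite !subrK => ->.
- case: ifP => // yi [] /eqP; rewrite addrC -subr_eq0 addrK mulf_eq0 (negbTE r0) /=.
  by rewrite invr_eq0 subr_eq0 yi.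
- case: ifP => // yi [] /esym /eqP; rewrite addrC -subr_eq0 addrK mulf_eq0 (negbTE r0) /=.
  by rewrite invr_eq0 subr_eq0 yi.
- by [].
Qed.

Lemma nz_neq0 (r : F) : nz r != 0.
Proof. by rewrite /nz; case: ifP => [_|/negbT]; rewrite ?oner_neq0. Qed.

Lemma fKri_nz_inj (K r i : F) : injective (fKri K (nz r) i).
Proof. exact: fKri_inj (nz_neq0 r). Qed.

Definition mk (K r i : F) : {perm option F} := perm (@fKri_nz_inj K r i).

Lemma mkE (K r i : F) : r != 0 -> forall o, mk K r i o = fKri K r i o.
Proof. by move=> r0 o; rewrite permE /nz (negbTE r0). Qed.

Lemma fKri_uniq (K r i L s j : F) :
  (forall o, fKri K r i o = fKri L s j o) -> [/\ K = L, i = j & r = s].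
Proof.
move=> H.
have := H None => /= [[KL]].
have := H (Some i); rewrite /= eqxx; case: ifP => // /eqP ij _.
subst; split=> //.
have := H (Some (j + 1)); rewrite /=.
have e : j + 1 - j = 1 by ring.
have -> : (j + 1 == j) = false.
  by apply/negP => /eqP h; move: e; rewrite h subrr => /eqP; rewrite eq_sym oner_eq0.
by rewrite e !divr1 => [[]] /addrI.
Qed.

Lemma fKri_PGL (s : {perm option F}) (K r i : F) : r != 0 ->
  (forall o, s o = fKri K r i o) -> s \in PGL F.
Proof.
move=> r0 Hs; rewrite inE; apply/existsP; exists K; apply/existsP; exists (r - K * i).
apply/existsP; exists 1; apply/existsP; exists (- i); apply/andP; split.
  rewrite mulr1 mulrN; apply/negP => /eqP h; move/eqP: r0; apply.
  by rewrite -(subrK (K * i) r) -h addNr.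
apply/forallP => o; rewrite Hs /mobius oner_eq0 /fKri.
case: o => [y|]; last by rewrite divr1.
rewrite opprK divr1 mul1r; case: ifP => // yi.
have yi' : y - i != 0 by rewrite subr_eq0 yi.
by apply/eqP; congr Some; fld.
Qed.

Lemma PGL_cases (s : {perm option F}) : s \in PGL F ->
  (exists a b, a != 0 /\ forall o, s o = omap (aff a b) o) \/
  (exists K r i, r != 0 /\ forall o, s o = fKri K r i o).
Proof.
rewrite inE => /existsP [a /existsP [b /existsP [c /existsP [d /andP [Had /forallP Hs]]]]].
case c0: (c == 0).
  left; move: Had; rewrite (eqP c0) mulr0 mulf_eq0 negb_or => /andP [a0 d0].
  exists (a / d), (b / d); split; first by rewrite mulf_neq0 // invr_neq0.
  move=> [y|]; rewrite (eqP (Hs _)) /mobius c0 //=.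
  by congr Some; rewrite /aff mulrDl mulrAC.
right; have c0' : c != 0 by rewrite c0.
exists (a / c), ((b * c - a * d) / c ^+ 2), (- d / c); split.
  rewrite mulf_neq0 // ?invr_neq0 ?expf_neq0 //.
  by rewrite subr_eq0 eq_sym.
move=> [y|]; rewrite (eqP (Hs _)) /mobius c0 /fKri //.
case: ifP => // yi; congr Some.
have yi' : y - - d / c != 0 by rewrite subr_eq0 yi.
have cy : c * y + d != 0.
  by rewrite (_ : c * y + d = c * (y - - d / c)); [rewrite mulf_neq0 | fld].
fld; by rewrite opprK mulrC.
Qed.

Lemma contr_f (s : {perm option F}) (K r i : F) : (forall o, s o = fKri K r i o) ->
  forall x, contr s (Some x) = Some (G K r i x).
Proof.
move=> Hs x; rewrite /contr /= !Hs /fKri /G.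
case: (eqVneq x i) => [->|xi]; first by rewrite eqxx subrr invr0 mulr0 addr0.
by [].
Qed.

Lemma contr_aff (s : {perm option F}) (a b : F) : (forall o, s o = omap (aff a b) o) ->
  forall x, contr s (Some x) = Some (aff a b x).
Proof. by move=> Hs x; rewrite /contr /= !Hs. Qed.

Definition Aset (s t : {perm option F}) := [set x : F | contr s (Some x) == contr t (Some x)].

Lemma hdE (s t : {perm option F}) : hd (contr s) (contr t) = (#|F| - #|Aset s t|)%N.
Proof.
have -> : hd (contr s) (contr t) = #|Some @: (~: Aset s t)|.
  apply: eq_card => -[y|]; rewrite !inE.
  - by rewrite mem_imset; [rewrite !inE | exact: Some_inj].
  - have c0 u : contr u None = None by [].
  rewrite !c0 eqxx; apply/esym/negP => /imsetP [y _] //.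
rewrite card_imset; last exact: Some_inj.
by rewrite -(cardsC (Aset s t)) addKn.
Qed.

Lemma AsetE (s t : {perm option F}) g h : (forall x, contr s (Some x) = Some (g x)) ->
  (forall x, contr t (Some x) = Some (h x)) -> Aset s t = agree g h.
Proof. by move=> Hs Ht; apply/setP => x; rewrite !inE Hs Ht. Qed.

Lemma adjA (s t : {perm option F}) : (4 <= #|F|)%N ->
  adj s t = [&& s \in PGL F, t \in PGL F, s != t & #|Aset s t| == 4%N].
Proof.
move=> h4; rewrite /adj hdE.
have : (#|Aset s t| <= #|F|)%N by apply: max_card.
move=> hA; congr [&& _, _, _ & _]; apply/eqP/eqP; lia.
Qed.

Lemma adj_sym (s t : {perm option F}) : adj s t = adj t s.
Proof.
rewrite /adj (eq_sym t s).
have -> : hd (contr s) (contr t) = hd (contr t) (contr s).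
  by apply: eq_card => x; rewrite !inE eq_sym.
by case: (s \in PGL F); case: (t \in PGL F).
Qed.

Lemma aff_noadj (s t : {perm option F}) (a b : F) : (4 <= #|F|)%N -> a != 0 ->
  (forall o, s o = omap (aff a b) o) -> ~~ adj s t.
Proof.
move=> h4 a0 Hs; rewrite adjA //; apply/negP => /and4P [_ tP st /eqP h].
case: (PGL_cases tP) => [[a' [b' [a0' Ht]]] | [L [r [i [r0 Ht]]]]].
- move: h; rewrite (AsetE (contr_aff Hs) (contr_aff Ht)).
  case: (boolP ((a != a') || (b != b'))) => [H|].
    by move=> h; have := @L1 a b a' b' H; rewrite h.
  rewrite negb_or !negbK => /andP [/eqP aa /eqP bb]; subst.
  by move: st; rewrite (_ : s = t) ?eqxx //; apply/permP => o; rewrite Hs Ht.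
- move: h; rewrite (AsetE (contr_aff Hs) (contr_f Ht)) => h.
  by have := @L2 a b L r i a0; rewrite h.
Qed.

Lemma adj_fE (w : F) (s t : {perm option F}) (K r i : F) :
  w ^+ 2 + w + 1 = 0 -> w != 1 -> (4 <= #|F|)%N -> r != 0 ->
  (forall o, s o = fKri K r i o) -> t \in PGL F ->
  adj s t <-> exists2 j, j != i & forall o, t o = fKri (K + r / (j - i)) r j o.
Proof.
move=> hw w1 h4 r0 Hs tP; have sP := fKri_PGL r0 Hs.
rewrite adjA // sP tP /=; split.
- case/andP => st /eqP h.
  case: (PGL_cases tP) => [[a [b [a0 Ht]]] | [L [s' [j [s0 Ht]]]]].
  + move: h; rewrite (AsetE (contr_f Hs) (contr_aff Ht)) agreeC => h.
    by have := @L2 a b K r i a0; rewrite h.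
  + move: h; rewrite (AsetE (contr_f Hs) (contr_f Ht)) => h.
    case: (eqVneq j i) => [ji|ji].
    * subst j; case: (boolP ((K != L) || (r != s'))) => [H|].
        by have := @L3 K r L s' i H; rewrite h.
      rewrite negb_or !negbK => /andP [/eqP KL /eqP rs]; subst.
      by move: st; rewrite (_ : s = t) ?eqxx //; apply/permP => o; rewrite Hs Ht.
    * have ij : i != j by rewrite eq_sym.
      have [e1 e2] := @L4b K r L s' i j ij r0 (eq_leq (esym h)).
      by exists j => // o; rewrite Ht e1 e2.
- case=> j ji Ht.
  have ij : i != j by rewrite eq_sym.
  apply/andP; split.
  + apply/eqP => st; have := Ht (Some i); rewrite -st Hs /= eqxx (negbTE ij) //.
  + rewrite (AsetE (contr_f Hs) (contr_f Ht)); apply/eqP/anti_leq/andP; split.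
    * exact: L4a.
    * exact: (@L5 w K r i j hw w1 ij r0).
Qed.

Lemma PrP (r : F) (x : {perm option F}) :
  reflect (x \in PGL F /\ exists a i, forall o, x o = fKri a r i o) (x \in Pr r).
Proof.
apply: (iffP idP) => [|[P [a [i H]]]].
  rewrite inE => /andP [P /existsP [a /existsP [i /forallP H]]].
  by split=> //; exists a, i => o; apply/eqP.
rewrite inE P /=; apply/existsP; exists a; apply/existsP; exists i; apply/forallP => o.
by rewrite H.
Qed.

Lemma BiP (r i : F) (x : {perm option F}) :
  reflect (x \in PGL F /\ exists a, forall o, x o = fKri a r i o) (x \in Bi r i).
Proof.
apply: (iffP idP) => [|[P [a H]]].
  rewrite inE => /andP [P /existsP [a /forallP H]].
  by split=> //; exists a => o; apply/eqP.
rewrite inE P /=; apply/existsP; exists a; apply/forallP => o.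
by rewrite H.
Qed.

Lemma PrI (r a i : F) (x : {perm option F}) : r != 0 ->
  (forall o, x o = fKri a r i o) -> x \in Pr r.
Proof. by move=> r0 H; apply/PrP; split; [exact: fKri_PGL H | exists a, i]. Qed.

Lemma BiI (r a i : F) (x : {perm option F}) : r != 0 ->
  (forall o, x o = fKri a r i o) -> x \in Bi r i.
Proof. by move=> r0 H; apply/BiP; split; [exact: fKri_PGL H | exists a]. Qed.

Lemma mk_inj (h : F -> F) (r : F) : r != 0 -> injective (fun k => mk (h k) r k).
Proof.
move=> r0 k k' /= e.
have H : forall o, fKri (h k) r k o = fKri (h k') r k' o.
  by move=> o; rewrite -!mkE // e.
by have [_ -> _] := fKri_uniq H.
Qed.

Lemma scaleK (lam a r i : F) o :
  omap (fun x => lam * x) (fKri a r i o) = fKri (lam * a) (lam * r) i o.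
Proof.
case: o => [y|] //=; case: ifP => //= _.
by rewrite mulrDr mulrA.
Qed.

Lemma contrM (x M : {perm option F}) : M None = None ->
  forall o, contr (x * M)%g o = M (contr x o).
Proof.
move=> MN [y|]; last by rewrite /contr /= MN.
have E z : (M z == None) = (z == None) by rewrite -{1}MN (inj_eq perm_inj).
rewrite /contr /= !permM E; by case: ifP.
Qed.
End Aux.

Theorem theorem13 (F : finFieldType) (p m : nat) :
  prime p -> odd p -> #|F| = (p ^ m)%N -> (#|F| %% 3 = 1)%N -> (13 <= #|F|)%N ->
  (* (a) *)
  (forall r s : F, r != 0 -> s != 0 ->
     exists phi : {perm option F} -> {perm option F},
       [/\ {in Pr r &, injective phi}, phi @: Pr r = Pr s &
           {in Pr r &, forall x y, adj (phi x) (phi y) = adj x y}]) /\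
  (* (b) *)
  (forall r i j : F, r != 0 -> i != j ->
     [/\ {in Bi r i &, forall x y, ~~ adj x y},
         {in Bi r j &, forall x y, ~~ adj x y},
         {in Bi r i, forall x, #|[set y in Bi r j | adj x y]| = 1%N} &
         {in Bi r j, forall y, #|[set x in Bi r i | adj x y]| = 1%N}]) /\
  (* (c) *)
  (forall r : F, r != 0 ->
     {in Pr r, forall v, #|[set w in Pr r | adj v w]| = (#|F| - 1)%N}) /\
  (* (d) *)
  (forall v, v \in PGL F -> nbhd v != set0 ->
     {in nbhd v, forall u, #|[set w in nbhd v | adj u w]| = 2%N}).
Proof.
move=> _ _ _ h3 h13.
have h4 : (4 <= #|F|)%N by lia.
have [w [hw w1]] := omega_ex h3.
split.
  move=> r s r0 s0.
  pose lam := s / r.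
  have l0 : lam != 0 by rewrite mulf_neq0 // invr_neq0.
  have lr : lam * r = s by rewrite /lam divfK.
  have injM : injective (omap (fun x : F => lam * x)).
    by move=> [x|] [y|] //= [] /(mulfI l0) ->.
  pose M := perm injM.
  have ME o : M o = omap (fun x => lam * x) o by rewrite permE.
  have MN : M None = None by rewrite ME.
  have Pimg x : x \in Pr r -> (x * M)%g \in Pr s.
    case/PrP => _ [a [i Hx]]; apply: (PrI (a := lam * a) (i := i) s0) => o.
    by rewrite permM ME Hx scaleK lr.
  exists (fun x => x * M)%g; split.
  - by move=> x y _ _; apply: (can_inj (mulgK M)).
  - apply/setP => t; apply/imsetP/idP.
      by case=> x xP ->; apply: Pimg.
    case/PrP => _ [a [i Ht]]; exists (mk (a / lam) r i).
      exact: (PrI r0 (mkE _ _ r0)).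
    apply/permP => o; rewrite Ht permM ME mkE // scaleK lr.
    by rewrite mulrCA mulfV // mulr1.
  - move=> x y xP yP /=.
    have xP' : x \in PGL F by case/PrP: xP.
    have yP' : y \in PGL F by case/PrP: yP.
    have xM : (x * M)%g \in PGL F by case/PrP: (Pimg _ xP).
    have yM : (y * M)%g \in PGL F by case/PrP: (Pimg _ yP).
    rewrite /adj xP' yP' xM yM (inj_eq (can_inj (mulgK M))).
    rewrite (_ : hd (contr (x * M)%g) (contr (y * M)%g) = hd (contr x) (contr y)) //.
    by apply: eq_card => o; rewrite !inE !contrM // (inj_eq perm_inj).
split.
  move=> r i j r0 ij.
  have noadj k : {in Bi r k &, forall x y, ~~ adj x y}.
    move=> x y /BiP [xP [a Hx]] /BiP [yP [b Hy]].
    apply/negP => /(adj_fE hw w1 h4 r0 Hx yP) [j' jk Hy'].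
    have H : forall o, fKri b r k o = fKri (a + r / (j' - k)) r j' o.
      by move=> o; rewrite -Hy -Hy'.
    by have [_ e _] := fKri_uniq H; move: jk; rewrite e eqxx.
  have cnt k l : k != l -> {in Bi r k, forall x, #|[set y in Bi r l | adj x y]| = 1%N}.
    move=> kl x /BiP [xP [a Hx]].
    rewrite -(cards1 (mk (a + r / (l - k)) r l)); congr #|pred_of_set _|.
    apply/setP => y; rewrite inE in_set1; apply/andP/eqP.
    + case=> /BiP [yP [b Hy]] /(adj_fE hw w1 h4 r0 Hx yP) [j' jk Hy'].
      have H : forall o, fKri b r l o = fKri (a + r / (j' - k)) r j' o.
        by move=> o; rewrite -Hy -Hy'.
      have [_ e _] := fKri_uniq H; subst j'.
      by apply/permP => o; rewrite Hy' mkE.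
    + move=> ->; split; first exact: (BiI r0 (mkE _ _ r0)).
      apply/(adj_fE hw w1 h4 r0 Hx); first exact: (fKri_PGL r0 (mkE _ _ r0)).
      by exists l; [rewrite eq_sym | exact: mkE].
  split.
  - exact: noadj.
  - exact: noadj.
  - exact: cnt.
  - move=> y yB.
    have -> : [set x in Bi r i | adj x y] = [set x in Bi r i | adj y x].
      by apply/setP => x; rewrite !inE adj_sym.
    by apply: (cnt j i) => //; rewrite eq_sym.
split.
  move=> r r0 v /PrP [vP [a [i Hv]]].
  have -> : [set w in Pr r | adj v w] =
            [set mk (a + r / (k - i)) r k | k in [set~ i]].
    apply/setP => x; rewrite inE; apply/andP/imsetP.
    + case=> /PrP [xP _] /(adj_fE hw w1 h4 r0 Hv xP) [k ki Hx].
      exists k; first by rewrite in_setC1.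
      by apply/permP => o; rewrite Hx mkE.
    + case=> k; rewrite in_setC1 => ki ->; split.
        exact: (PrI r0 (mkE _ _ r0)).
      apply/(adj_fE hw w1 h4 r0 Hv); first exact: (fKri_PGL r0 (mkE _ _ r0)).
      by exists k => //; exact: (mkE _ _ r0).
  rewrite card_imset; last exact: (@mk_inj _ (fun k => a + r / (k - i)) r r0).
  exact: (etrans (cardsC1 i) (esym (subn1 _))).
move=> v vP /set0Pn [w0]; rewrite inE => /andP [_ avw0].
case: (PGL_cases vP) => [[a [b [a0 Hv]]]|[K [r [i [r0 Hv]]]]].
  by move: avw0; rewrite (negbTE (aff_noadj _ h4 a0 Hv)).
move=> u; rewrite inE => /andP [uP /(adj_fE hw w1 h4 r0 Hv uP) [j ji Hu]].
have ij : i != j by rewrite eq_sym.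
have ji0 : j - i != 0 by rewrite subr_eq0.
have [ht1 ht2 t12] := root_facts hw w1.
have -> : [set x in nbhd v | adj u x] =
   [set mk (K + r / (k - i)) r k | k in [set i + (- w) * (j - i); i + (- w ^+ 2) * (j - i)]].
  apply/setP => x; rewrite inE [x \in nbhd v]inE; apply/andP/imsetP.
  + case=> /andP [xP /(adj_fE hw w1 h4 r0 Hv xP) [k ki Hx]].
    move=> /(adj_fE hw w1 h4 r0 Hu xP) [k' kj Hx'].
    have H : forall o, fKri (K + r / (k - i)) r k o = fKri (K + r / (j - i) + r / (k' - j)) r k' o.
      by move=> o; rewrite -Hx -Hx'.
    have [e1 e2 _] := fKri_uniq H; subst k'.
    have e : r / (k - i) = r / (j - i) + r / (k - j) by apply: (addrI K); rewrite addrA.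
    exists k; first by rewrite !inE; exact: (tri_inv hw ij r0 ki kj e).
    by apply/permP => o; rewrite Hx mkE.
  + case=> k kT ->.
    have [t ht kE] : exists2 t, t ^+ 2 - t + 1 = 0 & k = i + t * (j - i).
      by move: kT; rewrite !inE => /orP [] /eqP ->; [exists (- w) | exists (- w ^+ 2)].
    have [ki kj e] := xt_facts r ij ht; rewrite -kE in ki kj e.
    have mP : mk (K + r / (k - i)) r k \in PGL F by exact: (fKri_PGL r0 (mkE _ _ r0)).
    split; first (rewrite mP /=; apply/(adj_fE hw w1 h4 r0 Hv mP)).
      by exists k => //; exact: (mkE _ _ r0).
    apply/(adj_fE hw w1 h4 r0 Hu mP).
    by exists k => // o; rewrite mkE // e addrA.
rewrite card_imset; last exact: (@mk_inj _ (fun k => K + r / (k - i)) r r0).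
rewrite cards2 (inj_eq (addrI i)) (inj_eq (mulIf ji0)) t12 //.
Qed.
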